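(* Let $\varphi\in\mathcal I^L$ and let $S=(S_{kl})$ be the symmetric integer matrix with $\varphi_*(b_l)=b_l+\sum_k S_{kl}a_k$. Then for every $x\in D_2(H)$, $$\mu(x,\varphi)=\Big(\tfrac12\omega_S+\omega_\delta\Big)\big(\operatorname{Tr}^{\omega_S}(x)\big).$$
   Context: Let $\Sigma_{g,1}$ be a compact connected oriented surface of genus $g$ with one boundary component, $\mathcal M$ its mapping class group (fixing the boundary pointwise), $H=H_1(\Sigma_{g,1};\mathbb Z)$ with intersection form $\omega$, $\mathcal L(H)$ the free Lie ring on $H$ embedded in $T(H)$ via $[x,y]=x\otimes y-y\otimes x$, and $D_2(H)=\ker(H\otimes\mathcal L_3(H)\to\mathcal L_4(H),\ h\otimes u\mapsto[h,u])$. Let $V_g$ be a handlebody with $\Sigma_{g,1}\subset\partial V_g$; $A=\ker(H\to H_1(V_g;\mathbb Z))$. The Lagrangian Torelli group is $\mathcal I^L:=\{\varphi\in\mathcal M:\varphi_*(A)\subset A,\ \varphi_*|_A=\mathrm{id}\}$. Let $j:\Sigma_{g,1}\to S^3$ be a Heegaard embedding (i.e. $j(\Sigma_{g,1})$ is a genus-$g$ Heegaard surface minus an open disk, splitting $S^3$ into inner handlebody $\overline V$ and outer $\overline W$, oriented from $\overline V$) which extends to $V_g$ with $j(V_g)=\overline V$; $j^+$ is $j$ pushed into $\overline W$. Fix a symplectic basis $(a_1,\dots,a_g,b_1,\dots,b_g)$ of $H$ (classes of meridians and parallels of $\overline V$, pulled back by $j$) with $a_i\in A$, such that $\operatorname{lk}(j_*(x),j^+_*(y))=\omega_\delta(x,y)$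 for all $x,y\in H$, where $\omega_\delta$ is the bilinear form on $H$ with $\omega_\delta(b_i,a_k)=\delta_{ik}$ and $\omega_\delta$ vanishing on all other pairs of basis vectors. For a symmetric matrix $S$, $\omega_S$ is the bilinear form on $H$ with $\omega_S(b_k,b_l)=S_{kl}$ and $\omega_S(a_k,\cdot)=\omega_S(\cdot,a_k)=0$; a bilinear form $\beta$ is applied to $H\otimes H$ by $x\otimes y\mapsto\beta(x,y)$. $\operatorname{Tr}^{\omega_S}:D_2(H)\to H^{\otimes2}$ is the composite $D_2(H)\subset H\otimes\mathcal L_3(H)\subset H^{\otimes4}\to H^{\otimes2}$, $x_1\otimes x_2\otimes x_3\otimes x_4\mapsto\omega_S(x_1,x_2)\,x_3\otimes x_4$. With $x\leftrightarrow y:=x\otimes y+y\otimes x$, $T(a,b;c,d):=a\otimes[b,[c,d]]+b\otimes[[c,d],a]+c\otimes[d,[a,b]]+d\otimes[[a,b],c]$, $a\odot b:=a\otimes[b,[a,b]]+b\otimes[[a,b],a]$, let $\Psi:(\Lambda^2H\otimes\Lambda^2H)^{\mathfrak S_2}\to D_2(H)$ be the surjection $(a\wedge b)\leftrightarrow(c\wedge d)\mapsto T(a,b;c,d)$, $(a\wedge b)\otimes(a\wedge b)\mapsto a\odot b$. Let $\mathcal C$ be the commutative unital ring generated by $l(u,v)$ ($u,v\in H$), linear in $u$, with $l(v,u)=l(u,v)+\omega(u,v)$; for a Heegaard embedding $k$, $\varepsilon_k:\mathcal C\to\mathbb Z$ is the ring map $l(u,v)\mapsto\operatorname{lk}(k_*(u),k^+_*(v))$;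 $\theta:(\Lambda^2H\otimes\Lambda^2H)^{\mathfrak S_2}\to\mathcal C$ is given by $(u\wedge v)\otimes(u\wedge v)\mapsto l(u,u)l(v,v)-l(u,v)l(v,u)$ and $(a\wedge b)\leftrightarrow(c\wedge d)\mapsto l(a,c)l(b,d)-l(a,d)l(b,c)-l(d,a)l(c,b)+l(c,a)l(d,b)$. Finally $\mu:D_2(H)\times\mathcal M\to\mathbb Z$ is the (well-defined) map $\mu(\Psi(x),\varphi)=(\varepsilon_j-\varepsilon_{j\circ\varphi})(\theta(x))$. *)

(* Defs.v *)
(* Algebraic model of H = H_1(Sigma_{g,1};Z) = Z^{2g}
   with symplectic basis (a_1..a_g, b_1..b_g), row-vector convention. *)
From mathcomp Require Import all_boot all_algebra.
Set Implicit Arguments. Unset Strict Implicit. Unset Printing Implicit Defensive.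
Import GRing.Theory.
Local Open Scope ring_scope.

Definition H (g : nat) := 'rV[int]_(g + g).
Definition avec {g : nat} (i : 'I_g) : H g := delta_mx 0 (lshift g i).
Definition bvec {g : nat} (i : 'I_g) : H g := delta_mx 0 (rshift g i).

Definition bil {g : nat} (M : 'M[int]_(g + g)) (x y : H g) : int :=
  (x *m M *m y^T) 0 0.

(* intersection form: omega(a_i,b_j) = delta_ij, omega(b_j,a_i) = -delta_ij *)
Definition omega_mx (g : nat) : 'M[int]_(g + g) := block_mx 0 1%:M (- 1%:M) 0.
Definition omega_delta_mx (g : nat) : 'M[int]_(g + g) := block_mx 0 0 1%:M 0.
Definition omega_S_mx {g : nat} (S : 'M[int]_g) : 'M[int]_(g + g) :=
  block_mx 0 0 0 S.

(* Formal elements of the tensor algebra T(H) (over Q): finite formal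
   linear combinations of words x_1 (x) ... (x) x_n. *)
Definition tensor (g : nat) := seq (rat * seq (H g)).
Definition tvec {g : nat} (x : H g) : tensor g := [:: (1, [:: x])].
Definition tadd {g : nat} (s t : tensor g) : tensor g := s ++ t.
Definition tscale {g : nat} (c : rat) (s : tensor g) : tensor g :=
  [seq (c * p.1, p.2) | p <- s].
Definition tmul {g : nat} (s t : tensor g) : tensor g :=
  [seq (p.1 * q.1, p.2 ++ q.2) | p <- s, q <- t].
Definition tsub {g : nat} (s t : tensor g) : tensor g := tadd s (tscale (-1) t).
Definition lie {g : nat} (s t : tensor g) : tensor g := tsub (tmul s t) (tmul t s).

Definition Tgen {g : nat} (a b c d : H g) : tensor g :=
  tadd (tadd (tmul (tvec a) (lie (tvec b) (lie (tvec c) (tvec d))))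
             (tmul (tvec b) (lie (lie (tvec c) (tvec d)) (tvec a))))
       (tadd (tmul (tvec c) (lie (tvec d) (lie (tvec a) (tvec b))))
             (tmul (tvec d) (lie (lie (tvec a) (tvec b)) (tvec c)))).
Definition odot {g : nat} (a b : H g) : tensor g :=
  tadd (tmul (tvec a) (lie (tvec b) (lie (tvec a) (tvec b))))
       (tmul (tvec b) (lie (lie (tvec a) (tvec b)) (tvec a))).

(* Generators of (Lambda^2 H (x) Lambda^2 H)^{S_2}:
   GPair a b c d = (a^b) <-> (c^d),  GSq a b = (a^b)(x)(a^b).
   A general element is a finite Z-linear combination of generators. *)
Inductive gen (g : nat) : Type :=
| GPair of H g & H g & H g & H g
| GSq of H g & H g.
Arguments GPair {g}. Arguments GSq {g}.

Definition Psi_gen {g : nat} (x : gen g) : tensor g :=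
  match x with
  | GPair a b c d => Tgen a b c d
  | GSq a b => odot a b
  end.
Definition Psi {g : nat} (x : seq (int * gen g)) : tensor g :=
  flatten [seq tscale (p.1)%:~R (Psi_gen p.2) | p <- x].

(* theta followed by a ring map epsilon : C -> Z, where epsilon is
   determined by its values L u v = epsilon(l(u,v)). *)
Definition theta_gen {g : nat} (L : H g -> H g -> int) (x : gen g) : int :=
  match x with
  | GPair a b c d => L a c * L b d - L a d * L b c - L d a * L c b + L c a * L d b
  | GSq u v => L u u * L v v - L u v * L v u
  end.
Definition eps_theta {g : nat} (L : H g -> H g -> int) (x : seq (int * gen g)) : int :=
  \sum_(p <- x) p.1 * theta_gen L p.2.

(* epsilon_j(l(u,v)) = lk(j_* u, j^+_* v) = omega_delta(u,v) *)
Definition lk_j {g : nat} : H g -> H g -> int := bil (omega_delta_mx g).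
(* epsilon_{j o phi}(l(u,v)) = lk(j_* phi_* u, j^+_* phi_* v)
   = omega_delta(phi_* u, phi_* v), where phi_* acts by x |-> x *m P *)
Definition lk_jphi {g : nat} (P : 'M[int]_(g + g)) : H g -> H g -> int :=
  fun u v => bil (omega_delta_mx g) (u *m P) (v *m P).

(* mu(Psi(x), phi) = (eps_j - eps_{j o phi})(theta(x)) *)
Definition mu {g : nat} (P : 'M[int]_(g + g)) (x : seq (int * gen g)) : int :=
  eps_theta lk_j x - eps_theta (lk_jphi P) x.

Definition tlin {g : nat} (f : seq (H g) -> rat) (t : tensor g) : rat :=
  \sum_(p <- t) p.1 * f p.2.

Definition half_S_plus_delta {g : nat} (S : 'M[int]_g) (x y : H g) : rat :=
  (bil (omega_S_mx S) x y)%:~R / 2%:R + (bil (omega_delta_mx g) x y)%:~R.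

(* word x1 x2 x3 x4 |-> omega_S(x1,x2) * beta(x3,x4): i.e. beta o Tr^{omega_S} *)
Definition trS_then {g : nat} (S : 'M[int]_g) (beta : H g -> H g -> rat)
  (w : seq (H g)) : rat :=
  match w with
  | [:: x1; x2; x3; x4] => (bil (omega_S_mx S) x1 x2)%:~R * beta x3 x4
  | _ => 0
  end.

(* Main.v *)
Require Import Defs.
From mathcomp Require Import all_boot all_algebra.
Import GRing.Theory.
Local Open Scope ring_scope.

Lemma P_block (g : nat) (P : 'M[int]_(g + g)) (S : 'M[int]_g)
  (P_A : forall i : 'I_g, avec i *m P = avec i)
  (P_B : forall l : 'I_g, bvec l *m P = bvec l + \sum_(k < g) S k l *: avec k)
  (S_sym : S^T = S) : P = block_mx 1%:M 0 S 1%:M.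
Proof.
apply/matrixP => i j.
have -> : P i j = row i P 0 j by rewrite mxE.
rewrite rowE.
case: (split_ordP i) => i' ->{i}.
- have := P_A i'; rewrite /avec => ->.
  case: (split_ordP j) => j' ->{j}; rewrite ?block_mxEul ?block_mxEur !mxE /=.
  + by rewrite eq_lshift eq_sym.
  + by rewrite eq_rlshift.
- have := P_B i'; rewrite /bvec /avec => ->.
  case: (split_ordP j) => j' ->{j}; rewrite ?block_mxEdl ?block_mxEdr !mxE summxE /=.
  + rewrite eq_lrshift add0r (bigD1 j') //= big1 ?addr0.
      by rewrite !mxE !eqxx mulr1 -{1}S_sym mxE.
    by move=> k /negbTE nk; rewrite !mxE eq_lshift eq_sym nk mulr0.
  + rewrite eq_rshift eq_sym big1 ?addr0 //.
    by move=> k _; rewrite !mxE eq_rlshift mulr0.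
Qed.

Lemma lkphiE (g : nat) (P : 'M[int]_(g + g)) (S : 'M[int]_g)
  (P_A : forall i : 'I_g, avec i *m P = avec i)
  (P_B : forall l : 'I_g, bvec l *m P = bvec l + \sum_(k < g) S k l *: avec k)
  (S_sym : S^T = S) u v :
  lk_jphi P u v = bil (omega_delta_mx g) u v + bil (omega_S_mx S) u v.
Proof.
rewrite /lk_jphi /bil trmx_mul !mulmxA -[u *m P *m _ *m _]mulmxA -[u *m P *m _]mulmxA.
have -> : P *m (omega_delta_mx g *m P^T) = omega_delta_mx g + omega_S_mx S.
  rewrite (@P_block g P S P_A P_B S_sym) /omega_delta_mx /omega_S_mx tr_block_mx !trmx0 !trmx1 S_sym.
  rewrite !mulmx_block add_block_mx.
  by rewrite !(mul0mx, mulmx0, mul1mx, mulmx1, addr0, add0r).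
by rewrite mulmxDr mulmxDl mxE.
Qed.

Lemma bilS_sym (g : nat) (S : 'M[int]_g) (S_sym : S^T = S) u v :
  bil (omega_S_mx S) u v = bil (omega_S_mx S) v u.
Proof.
rewrite /bil.
have E : forall (A : 'M[int]_1), A 0 0 = A^T 0 0 by move=> A; rewrite mxE.
rewrite E !trmx_mul trmxK /omega_S_mx tr_block_mx !trmx0 S_sym.
by rewrite mulmxA.
Qed.
From mathcomp Require Import ring.

Lemma gen_id (g : nat) (P : 'M[int]_(g + g)) (S : 'M[int]_g)
  (P_A : forall i : 'I_g, avec i *m P = avec i)
  (P_B : forall l : 'I_g, bvec l *m P = bvec l + \sum_(k < g) S k l *: avec k)
  (S_sym : S^T = S) (x : gen g) :
  ((theta_gen lk_j x - theta_gen (lk_jphi P) x)%:~R : rat)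
  = tlin (trS_then S (half_S_plus_delta S)) (Psi_gen x).
Proof.
have sy := @bilS_sym g S S_sym.
have lk := @lkphiE g P S P_A P_B S_sym.
case: x => [a b c d|u v] /=; rewrite !lk /lk_j /tlin /Tgen /odot /lie /tsub /tadd /tmul /tscale /tvec /=;
  rewrite !big_cons big_nil /= /half_S_plus_delta.
- rewrite ?(sy b a) ?(sy c a) ?(sy d a) ?(sy c b) ?(sy d b) ?(sy d c).
  rewrite !(intrD, intrM, intrB). by field.
- rewrite ?(sy v u).
  by field.
Qed.

Theorem corollary4p17 (g : nat) (P : 'M[int]_(g + g)) (S : 'M[int]_g)
  (P_sympl : P *m omega_mx g *m P^T = omega_mx g)
  (P_A : forall i : 'I_g, avec i *m P = avec i)
  (P_B : forall l : 'I_g, bvec l *m P = bvec l + \sum_(k < g) S k l *: avec k)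
  (S_sym : S^T = S) :
  forall x : seq (int * gen g),
    ((mu P x)%:~R : rat) = tlin (trS_then S (half_S_plus_delta S)) (Psi x).
Proof.
elim => [|[c y] x IH].
  by rewrite /mu /eps_theta !big_nil /Psi /tlin /= big_nil.
have -> : Psi ((c, y) :: x) = tadd (tscale c%:~R (Psi_gen y)) (Psi x) by [].
rewrite /tlin /tadd big_cat /= -/(tlin _ (Psi x)) -IH.
rewrite /tscale big_map /=.
have -> : \sum_(i <- Psi_gen y) c%:~R * i.1 * trS_then S (half_S_plus_delta S) i.2
   = c%:~R * tlin (trS_then S (half_S_plus_delta S)) (Psi_gen y).
  by rewrite /tlin big_distrr /=; apply: eq_bigr => i _; rewrite mulrA.
rewrite -(@gen_id g P S P_A P_B S_sym y).
rewrite /mu /eps_theta !big_cons /=.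
rewrite !(intrD, intrM, intrB). ring.
Qed.
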